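(* Let $(X,\{R_i\}_{i=0}^d)$ be a symmetric association scheme with adjacency matrices $A_0=I,\dots,A_d$ and intersection numbers $p_{ij}^k$, and let $W=\sum_{i=0}^dw_iA_i$ with $w_0=1$ be a complex Hadamard matrix. Suppose there exists $i\in\{1,\dots,d-1\}$ such that $p_{i_1,j_1}^i>0$ for all $i_1,j_1\in\{1,\dots,d-1\}$, and moreover $p_{i,j}^d>0$ for all $j\in\{1,\dots,d-1\}$. Then \[ H_4(W)\setminus\{1\}=\left\{\frac{w_{i_1}w_{i_2}}{w_{j_1}w_{j_2}}\;\middle|\;i_1,i_2,j_1,j_2\in\{1,\dots,d\}\right\}\setminus\{1\}. \]
   Context: An association scheme $(X,\{R_i\}_{i=0}^d)$ is a partition of $X\times X$ into relations $R_0=\{(x,x)\}$, $R_1,\dots,R_d$ such that for $(x,y)\in R_k$ the number $p_{ij}^k=|\{z\in X:(x,z)\in R_i,(z,y)\in R_j\}|$ depends only on $i,j,k$; symmetric means each $R_i$ is symmetric. $A_i$ is the $(0,1)$-matrix of $R_i$. A complex Hadamard matrix is a square complex matrix $H$ of order $n=|X|$ with entries of absolute value $1$ and $HH^*=nI$. For $W$ indexed by $X$, \[ H_4(W)=\left\{\frac{W_{x_1,y_1}W_{x_2,y_2}}{W_{x_2,y_1}W_{x_1,y_2}}\;\middle|\;x_1,x_2,y_1,y_2\in X,\ |\{x_1,x_2,y_1,y_2\}|=4\right\}. \] *)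

(* Defs.v *)
From HB Require Import structures.
From mathcomp Require Import all_boot all_order all_algebra.
From mathcomp Require Import complex.
From mathcomp Require Import reals.
Set Implicit Arguments. Unset Strict Implicit. Unset Printing Implicit Defensive.
Import Order.TTheory GRing.Theory Num.Theory.
Local Open Scope ring_scope.

(* A scheme on the finite set X with classes 0..d is encoded by the relation
   function r : X -> X -> 'I_(d.+1), with (x,y) \in R_i <-> r x y = i. *)

Definition pcount (X : finType) (d : nat) (r : X -> X -> 'I_d.+1)
  (i j : 'I_d.+1) (x y : X) : nat :=
  #|[set z | (r x z == i) && (r z y == j)]|.

Definition sym_assoc_scheme (X : finType) (d : nat) (r : X -> X -> 'I_d.+1) : Prop :=
  [/\ (forall x y, (r x y == ord0) = (x == y)),
      (forall i : 'I_d.+1, exists x y, r x y = i),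
      (forall x y, r x y = r y x) &
      (forall (i j : 'I_d.+1) x y x' y', r x y = r x' y' ->
          pcount r i j x y = pcount r i j x' y')].

(* intersection number p_ij^k (evaluated at some pair in R_k; 0 if R_k empty) *)
Definition inter_num (X : finType) (d : nat) (r : X -> X -> 'I_d.+1)
  (i j k : 'I_d.+1) : nat :=
  if [pick xy : X * X | r xy.1 xy.2 == k] is Some xy
  then pcount r i j xy.1 xy.2 else 0%N.

Definition adjA (X : finType) (d : nat) (r : X -> X -> 'I_d.+1) (C : nzRingType)
  (i : 'I_d.+1) (x y : X) : C := (r x y == i)%:R.

Definition schemeW (X : finType) (d : nat) (r : X -> X -> 'I_d.+1)
  (C : nzRingType) (w : 'I_d.+1 -> C) (x y : X) : C :=
  \sum_(i < d.+1) w i * adjA r C i x y.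

Definition complex_hadamard (X : finType) (R : rcfType) (W : X -> X -> R[i]) : Prop :=
  (forall x y, `|W x y| = 1) /\
  (forall x y, \sum_(z : X) W x z * (W y z)^* = (x == y)%:R * #|X|%:R).

Definition H4 (X : finType) (C : fieldType) (W : X -> X -> C) (c : C) : Prop :=
  exists x1 x2 y1 y2 : X,
    [/\ uniq [:: x1; x2; y1; y2] &
        c = W x1 y1 * W x2 y2 / (W x2 y1 * W x1 y2)].

(* Main.v *)
Require Import Defs.
From HB Require Import structures.
From mathcomp Require Import all_boot all_order all_algebra.
From mathcomp Require Import complex.
From mathcomp Require Import reals.
From mathcomp Require Import zify ring.
Set Implicit Arguments. Unset Strict Implicit.
Import Order.TTheory GRing.Theory Num.Theory.
Local Open Scope ring_scope.
Lemma W_eq (R : realType) (X : finType) (d : nat) (r : X -> X -> 'I_d.+1)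
  (w : 'I_d.+1 -> R[i]) x y : schemeW r w x y = w (r x y).
Proof.
rewrite /schemeW (bigD1 (r x y)) //= /adjA eqxx mulr1 big1 ?addr0 // => k hk.
by rewrite eq_sym (negbTE hk) mulr0.
Qed.

Lemma pick_ex (X : finType) (d : nat) (r : X -> X -> 'I_d.+1) a b k :
  (0 < inter_num r a b k)%N -> exists x y z, [/\ r x y = k, r x z = a & r z y = b].
Proof.
rewrite /inter_num; case: pickP => [[x y] /= /eqP hk|] //.
rewrite /pcount card_gt0 => /set0Pn [z]; rewrite inE => /andP [/eqP h1 /eqP h2].
by exists x, y, z.
Qed.

Lemma transfer (X : finType) (d : nat) (r : X -> X -> 'I_d.+1) a b x y x' y' :
  sym_assoc_scheme r -> r x y = r x' y' ->
  (exists z, r x' z = a /\ r z y' = b) -> exists z, r x z = a /\ r z y = b.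
Proof.
case=> _ _ _ hp e [z [h1 h2]].
have : (0 < pcount r a b x y)%N.
  rewrite (hp a b x y x' y' e) /pcount card_gt0; apply/set0Pn; exists z.
  by rewrite inE h1 h2 !eqxx.
rewrite /pcount card_gt0 => /set0Pn [z']; rewrite inE => /andP [/eqP h1' /eqP h2'].
by exists z'.
Qed.

Lemma ord_maxE (d : nat) (a : 'I_d.+1) : (d <= a)%N -> a = ord_max.
Proof. move=> h; apply/val_inj => /=; have := ltn_ord a; lia. Qed.

Lemma good (X : finType) (d : nat) (r : X -> X -> 'I_d.+1) (i : 'I_d.+1) :
  sym_assoc_scheme r ->
  (forall i1 j1 : 'I_d.+1, (0 < i1)%N -> (i1 < d)%N ->
             (0 < j1)%N -> (j1 < d)%N -> (0 < inter_num r i1 j1 i)%N) ->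
  (forall j : 'I_d.+1, (0 < j)%N -> (j < d)%N ->
             (0 < inter_num r i j ord_max)%N) ->
  forall a b : 'I_d.+1, (0 < a)%N -> (0 < b)%N -> ((a < d) || (b < d))%N ->
  forall x y, r x y = i -> exists z, r x z = a /\ r z y = b.
Proof.
move=> S H1 H2 a b a0 b0 hab x y hxy.
have hsym := let: And4 _ _ h _ := S in h.
case: (ltnP a d) => ha; case: (ltnP b d) => hb.
- have [p [q [z [e1 e2 e3]]]] := pick_ex (H1 a b a0 ha b0 hb).
  by apply: (transfer S (x' := p) (y' := q)); [rewrite hxy e1 | exists z].
- rewrite (ord_maxE hb).
  have [p [q [z [e1 e2 e3]]]] := pick_ex (H2 a a0 ha).
  apply: (transfer S (x' := z) (y' := p)); first by rewrite hxy hsym e2.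
  by exists q; rewrite e3 hsym e1.
- rewrite (ord_maxE ha).
  have [p [q [z [e1 e2 e3]]]] := pick_ex (H2 b b0 hb).
  apply: (transfer S (x' := p) (y' := z)); first by rewrite hxy e2.
  by exists q; rewrite e1 hsym e3.
- by move: hab; rewrite ltnNge ha ltnNge hb.
Qed.

Lemma neqr (X : finType) (d : nat) (r : X -> X -> 'I_d.+1) x y k :
  sym_assoc_scheme r -> r x y = k -> (0 < k)%N -> x != y.
Proof.
case=> h0 _ _ _ e hk; rewrite -h0 e; apply/eqP => e'; by rewrite e' in hk.
Qed.

Lemma core (R : realType) (X : finType) (d : nat)
  (r : X -> X -> 'I_d.+1) (w : 'I_d.+1 -> R[i]) (i : 'I_d.+1) :
  sym_assoc_scheme r -> (0 < i)%N ->
  (forall k, w k != 0) ->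
  forall a e b f : 'I_d.+1,
  (0 < a)%N -> (0 < e)%N -> (0 < b)%N -> (0 < f)%N ->
  (forall x y, r x y = i -> exists z, r x z = a /\ r z y = e) ->
  (forall x y, r x y = i -> exists z, r x z = b /\ r z y = f) ->
  forall c, c != 1 -> c = w a * w b / (w e * w f) -> H4 (schemeW r w) c.
Proof.
move=> S i0 wnz a e b f a0 e0 b0 f0 Gae Gbf c c1 E0; rewrite E0 in c1 *.
have S' := S; case: S' => h0 hex hsym hp.
have [x1 [x2 h12]] := hex i.
have [y1 [e1 e2]] := Gae _ _ h12.
have h21 : r x2 x1 = i by rewrite hsym.
have [y2 [e3 e4]] := Gbf _ _ h21.
exists x1, x2, y1, y2; split; last first.
  by rewrite !W_eq e1 e3 hsym e2 hsym e4.
have n1 := neqr S h12 i0.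
have n2 := neqr S e1 a0.
have n3 : x1 != y2 by rewrite eq_sym; apply: neqr S e4 f0.
have n4 : x2 != y1 by rewrite eq_sym; apply: neqr S e2 e0.
have n5 := neqr S e3 b0.
have n6 : y1 != y2.
  apply/eqP => E; subst y2; move: c1.
  have Ea : a = f by rewrite -e1 -e4 hsym.
  have Eb : e = b by rewrite -e3 -e2 hsym.
  by rewrite Ea Eb [w b * _]mulrC divff ?eqxx // mulf_neq0.
by rewrite /= !inE !negb_or n1 n2 n3 n4 n5 n6.
Qed.

Theorem lemma5p3 (R : realType) (X : finType) (d : nat)
  (r : X -> X -> 'I_d.+1) (w : 'I_d.+1 -> R[i]) :
  sym_assoc_scheme r ->
  w ord0 = 1 ->
  complex_hadamard (schemeW r w) ->
  (exists i : 'I_d.+1,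
     [/\ (0 < i)%N, (i < d)%N,
         (forall i1 j1 : 'I_d.+1, (0 < i1)%N -> (i1 < d)%N ->
             (0 < j1)%N -> (j1 < d)%N -> (0 < inter_num r i1 j1 i)%N) &
         (forall j : 'I_d.+1, (0 < j)%N -> (j < d)%N ->
             (0 < inter_num r i j ord_max)%N)]) ->
  forall c : R[i], c != 1 ->
    (H4 (schemeW r w) c <->
     exists i1 i2 j1 j2 : 'I_d.+1,
       [/\ (0 < i1)%N, (0 < i2)%N, (0 < j1)%N, (0 < j2)%N &
           c = w i1 * w i2 / (w j1 * w j2)]).
Proof.
move=> S w0 [Hab Hh] [i [hi0 hid Hi1 Hi2]] c c1.
have S' := S; case: S' => h0 hex hsym hp.
have pos : forall x y, x != y -> (0 < r x y)%N.
  move=> x y hxy; have : r x y != ord0 by rewrite h0.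
  by move=> hne; rewrite lt0n; apply: contra_neq hne => e; apply/val_inj.
split.
  case=> [x1 [x2 [y1 [y2 [u ->]]]]].
  exists (r x1 y1), (r x2 y2), (r x2 y1), (r x1 y2); rewrite !W_eq.
  move: u; rewrite /= !inE !negb_or => /and4P [/and3P [n1 n2 n3] /andP [n4 n5] n6 _].
  by split => //; apply: pos; rewrite // eq_sym.
have wnz : forall k, w k != 0.
  move=> k; have [x [y hk]] := hex k; have := Hab x y; rewrite W_eq hk => h.
  by apply/eqP => e; rewrite e normr0 in h; move/eqP: h; rewrite eq_sym oner_eq0.
have G := good S Hi1 Hi2.
have C := core S hi0 wnz.
case=> [i1 [i2 [j1 [j2 [p1 p2 p3 p4 E]]]]].
have [g1|ng1] := boolP (((i1<d)||(j1<d)) && ((i2<d)||(j2<d)))%N.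
  case/andP: g1 => g1 g2.
  exact: (C i1 j1 i2 j2 p1 p3 p2 p4 (G _ _ p1 p3 g1) (G _ _ p2 p4 g2) c c1 E).
have [g2|ng2] := boolP (((i1<d)||(j2<d)) && ((i2<d)||(j1<d)))%N.
  case/andP: g2 => g1 g2.
  apply: (C i1 j2 i2 j1 p1 p4 p2 p3 (G _ _ p1 p4 g1) (G _ _ p2 p3 g2) c c1).
  by rewrite E [w j1 * _]mulrC.
move: ng1 ng2 E c1.
case: (ltnP i1 d) => h1; case: (ltnP i2 d)=> h2; case: (ltnP j1 d) => h3;
  case: (ltnP j2 d) => h4 //= _ _;
  rewrite ?(ord_maxE h1) ?(ord_maxE h2) ?(ord_maxE h3) ?(ord_maxE h4) => E c1.
- have m0 : (0 < @ord_max d)%N by rewrite /=; lia.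
  apply: (C i1 ord_max i i p1 m0 hi0 hi0 (G _ _ p1 m0 (ltac:(by rewrite h1)))
            (G _ _ hi0 hi0 (ltac:(by rewrite hid))) c c1).
  rewrite E; field; rewrite ?mulf_neq0 ?wnz //.
- have m0 : (0 < @ord_max d)%N by rewrite /=; lia.
  apply: (C i2 ord_max i i p2 m0 hi0 hi0 (G _ _ p2 m0 (ltac:(by rewrite h2)))
            (G _ _ hi0 hi0 (ltac:(by rewrite hid))) c c1).
  rewrite E; field; rewrite ?mulf_neq0 ?wnz //.
- have m0 : (0 < @ord_max d)%N by rewrite /=; lia.
  apply: (C ord_max j1 i i m0 p3 hi0 hi0 (G _ _ m0 p3 (ltac:(by rewrite h3 orbT)))
            (G _ _ hi0 hi0 (ltac:(by rewrite hid))) c c1).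
  rewrite E; field; rewrite ?mulf_neq0 ?wnz //.
- have m0 : (0 < @ord_max d)%N by rewrite /=; lia.
  apply: (C ord_max j2 i i m0 p4 hi0 hi0 (G _ _ m0 p4 (ltac:(by rewrite h4 orbT)))
            (G _ _ hi0 hi0 (ltac:(by rewrite hid))) c c1).
  rewrite E; field; rewrite ?mulf_neq0 ?wnz //.
- by move: c1; rewrite E divff ?eqxx // mulf_neq0.
Qed.
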